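(* Let $U_1, \ldots, U_n$ be i.i.d. $\mathrm{Unif}([0, 1])$ with order statistics $U_{(1)}\le \ldots \le U_{(n)}$, and fix $\delta \in (0,1)$. Suppose $0\le b_1\le b_2\le \ldots \le b_{n}\le 1$ are reals such that \[\mathbb{P}\left[ U_{(1)}\le b_{1}, \ldots, U_{(n)}\le b_{n} \right] \ge 1 - \delta.\] Let $b_{0} = 0$, $b_{n+1} = 1$, and let $h: [0, 1]\to [0, 1]$ be the piecewise constant function $h(t) = b_{\lceil (n + 1)t\rceil}$, $t\in [0, 1]$. Define $\hat{u}^{\mathrm{(ccv)}} = h\circ \hat{u}^{\mathrm{(marg)}}$. Then, if $X_{2n+1}\sim P_X$ is independent of $\mathcal{D}$, \[\mathbb{P}\left[ \mathbb{P}\left[ \hat{u}^{\mathrm{(ccv)}}(X_{2n+1}) \leq t \mid \mathcal{D} \right] \leq t \text{ for all } t \in (0,1) \right] \geq 1-\delta.\]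
   Context: Setting: $P_X$ is a distribution on $\mathbb{R}^d$. Data $X_1,\dots,X_{2n}$ are i.i.d. from $P_X$; $\mathcal{D}^{\mathrm{train}}=\{X_1,\dots,X_n\}$ is treated as fixed (all probabilities conditional on it), $\mathcal{D}^{\mathrm{cal}}=\{X_{n+1},\dots,X_{2n}\}$, $\mathcal{D}=\mathcal{D}^{\mathrm{train}}\cup\mathcal{D}^{\mathrm{cal}}$. The score $\hat s:\mathbb{R}^d\to\mathbb{R}$ is a fixed function determined by $\mathcal{D}^{\mathrm{train}}$. Marginal conformal p-value: $\hat{u}^{\mathrm{(marg)}}(x) = \frac{1 + |\{i \in \{n+1,\dots,2n\} : \hat{s}(X_i) \le \hat{s}(x)\}|}{n+1}$. *)

(* Defs.v *)
From HB Require Import structures.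
From mathcomp Require Import all_boot all_order all_algebra.
From mathcomp Require Import all_classical all_reals all_analysis.
Set Implicit Arguments. Unset Strict Implicit. Unset Printing Implicit Defensive.
Import Order.TTheory GRing.Theory Num.Theory.
Local Open Scope classical_set_scope.
Local Open Scope ring_scope.

(* Mutual independence of a finite family of random variables X_0,...,X_{n-1}:
   the joint law is the product of the marginals on measurable rectangles
   (taking A i = setT recovers every subfamily). *)
Definition mutual_indep (dO dT : measure_display) (Omega : measurableType dO)
  (T : measurableType dT) (R : realType) (P : probability Omega R) (n : nat)
  (X : 'I_n -> Omega -> T) : Prop :=
  forall A : 'I_n -> set T, (forall i, measurable (A i)) ->
    P (\bigcap_(i in [set: 'I_n]) (X i @^-1` A i)) =
    (\prod_(i < n) P (X i @^-1` A i))%E.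

(* k-th order statistic (k = 1..n, 1-based) of the values u_0,...,u_{n-1}. *)
Definition ostat (R : realType) (n : nat) (u : 'I_n -> R) (k : nat) : R :=
  nth 0 (sort <=%R (map u (enum 'I_n))) k.-1.

(* Marginal conformal p-value: (1 + #{i : s(X_i) <= s(x)}) / (n+1),
   with cal i = X_{n+1+i} the calibration points. *)
Definition umarg (R : realType) (T : Type) (n : nat) (s : T -> R)
  (cal : 'I_n -> T) (x : T) : R :=
  (1 + count (fun i => s (cal i) <= s x) (enum 'I_n))%:R / n.+1%:R.

Definition hfun (R : realType) (n : nat) (b : nat -> R) (t : R) : R :=
  b (absz (Num.ceil (n.+1%:R * t))).

(* Main.v *)
Require Import Defs.
From HB Require Import structures.
From mathcomp Require Import all_boot all_order all_algebra.
From mathcomp Require Import all_classical all_reals all_analysis.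
Import Order.TTheory GRing.Theory Num.Theory.
Local Open Scope classical_set_scope.
Local Open Scope ring_scope.

Lemma sorted_count_nth (R : realType) (s : seq R) (i : nat) (c : R) :
  sorted <=%R s -> (i < size s)%N -> nth 0 s i <= c ->
  (i < count (fun x : R => (x <= c)%R) s)%N.
Proof.
elim: s i => [|x s IH] i //= Hs; case: i => [|i] /=.
  by move=> _ ->.
move=> Hi Hn.
have Hs' : sorted <=%R s by exact: path_sorted Hs.
have Hxs : x <= c.
  have : x <= nth 0 s i.
    have := order_path_min (@le_trans _ _) Hs.
    by move/allP; apply; rewrite mem_nth.
  by move/le_trans; apply.
by rewrite Hxs add1n ltnS IH.
Qed.

Lemma ostat_count (R : realType) (n : nat) (u : 'I_n -> R) (k : nat) (c : R) :
  (1 <= k <= n)%N -> ostat u k <= c ->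
  (k <= count (fun i => (u i <= c)%R) (enum 'I_n))%N.
Proof.
case/andP=> k1 kn; rewrite /ostat => H.
have Hs := sort_sorted (@le_total _ R) (map u (enum 'I_n)).
have Hsz : size (sort <=%R (map u (enum 'I_n))) = n.
  by rewrite size_sort size_map size_enum_ord.
have := sorted_count_nth _ _ _ _ Hs _ H.
rewrite Hsz prednK // => /(_ (leq_trans (leqnn _) kn)).
have -> : count (fun x : R => (x <= c)%R) (sort <=%R [seq u i | i <- enum 'I_n]) =
  count (fun i => (u i <= c)%R) (enum 'I_n).
  by rewrite (permP (permEl (perm_sort _ _))) count_map.
by [].
Qed.

Lemma count_iota_up (p : nat -> bool) (n k : nat) :
  (forall j, (0 < j)%N -> (j < n)%N -> p j -> p j.+1) ->
  (1 <= k <= n)%N ->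
  (count (predC p) (iota 1 n) < k)%N = p k.
Proof.
move=> Hp /andP[k1 kn].
have mono : forall j j', (0 < j)%N -> (j <= j')%N -> (j' <= n)%N -> p j -> p j'.
  move=> j j' j0; elim: j' => [|j' IH]; first by rewrite leqn0 => /eqP ->.
  rewrite leq_eqVlt => /orP[/eqP -> //|]; rewrite ltnS => jj' j'n pj.
  apply: Hp; [exact: leq_trans j0 jj'|exact: j'n|apply: IH => //; exact: ltnW].
have -> : iota 1 n = iota 1 k.-1 ++ k :: iota k.+1 (n - k).
  rewrite -[in LHS](subnKC kn) iotaD add1n.
  have -> : iota 1 k = iota 1 k.-1 ++ [:: k].
    have e : k = (k.-1 + 1)%N by rewrite addn1 prednK.
    by rewrite [in LHS]e iotaD add1n prednK.
  by rewrite -catA.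
case pk: (p k).
  rewrite count_cat /= pk /= add0n.
  have -> : count (predC p) (iota k.+1 (n - k)) = 0%N.
    apply/eqP; rewrite -leqn0 leqNgt -has_count; apply/hasPn => j.
    rewrite mem_iota => /andP[kj jn] /=; rewrite negbK.
    apply: (mono k) => //; first exact: ltnW.
    by rewrite -ltnS (leq_trans jn) // addSn subnKC.
  rewrite addn0 (leq_ltn_trans (count_size _ _)) // size_iota prednK //.
rewrite count_cat /= pk /=.
have -> : count (predC p) (iota 1 k.-1) = k.-1.
  rewrite (eq_in_count (a2 := predT)) ?count_predT ?size_iota //.
  move=> j; rewrite mem_iota => /andP[j1 jk] /=; apply/negP => pj.
  move: pk; rewrite (mono j k) //; rewrite add1n prednK // in jk; exact: ltnW.
by apply/negbTE; rewrite -leqNgt addnA addn1 prednK // leq_addr.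
Qed.

Lemma downset_cases (R : realType) (D : set R) :
  (forall x y, y <= x -> D x -> D y) ->
  D = set0 \/ D = setT \/ (exists v, D = [set x | x <= v]) \/
  (exists v, D = [set x | x < v]).
Proof.
move=> HD.
have [->|D0] := eqVneq D set0; first by left.
right; have [ub|nub] := pselect (has_ubound D); last first.
  left; apply/seteqP; split => // y _.
  apply: contrapT => Dy; apply: nub; exists y => x Dx.
  rewrite leNgt; apply/negP => yx; exact: Dy (HD _ _ (ltW yx) Dx).
have hs : has_sup D by split => //; exact/set0P.
right; have [Dv|nDv] := pselect (D (sup D)).
  left; exists (sup D); apply/seteqP; split => x /=.
    by move=> Dx; exact: sup_upper_bound.
  by move=> xv; exact: HD xv Dv.
right; exists (sup D); apply/seteqP; split => x /=.
  move=> Dx; rewrite lt_neqAle sup_upper_bound // andbT.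
  by apply/eqP => xe; apply: nDv; rewrite -xe.
move=> xv; have xv' : 0 < sup D - x by rewrite subr_gt0.
have [e De He] := sup_adherent xv' hs.
apply: HD De; move: He; rewrite opprB addrCA subrr addr0; exact: ltW.
Qed.

Lemma downset_measurable (R : realType) (D : set R) :
  (forall x y, y <= x -> D x -> D y) -> measurable D.
Proof.
move=> /downset_cases [->|[->|[[v ->]|[v ->]]]] //.
- have -> : [set x | x <= v] = `]-oo, v]%classic by apply/seteqP; split => x /=; rewrite in_itv.
  exact: measurable_itv.
- have -> : [set x | x < v] = `]-oo, v[%classic by apply/seteqP; split => x /=; rewrite in_itv.
  exact: measurable_itv.
Qed.

Lemma fiber_sum d (Om : measurableType d) (R : realType)
  (P : {measure set Om -> \bar R}) (F : finType) (h : Om -> F) :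
  (forall x, measurable (h @^-1` [set x])) ->
  forall s : seq F, uniq s ->
  measurable (h @^-1` [set x | x \in s]) /\
  P (h @^-1` [set x | x \in s]) = (\sum_(x <- s) P (h @^-1` [set x]))%E.
Proof.
move=> mh; elim => [|y s IH] /=.
  have -> : h @^-1` [set x | x \in [::]] = set0 by apply/seteqP; split => x.
  by rewrite big_nil measure0.
move=> /andP[ys us]; have [ms Ps] := IH us.
have -> : h @^-1` [set x | x \in y :: s] = h @^-1` [set y] `|` h @^-1` [set x | x \in s].
  apply/seteqP; split => x /=; rewrite in_cons.
    by case/orP => [/eqP->|]; [left|right].
  by case => [->|->]; rewrite ?eqxx ?orbT.
split; first exact: measurableU.
rewrite measureU //; first by rewrite big_cons -Ps.
by apply/seteqP; split => x //= [hy hs]; move: hs; rewrite /= hy (negbTE ys).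
Qed.

Lemma transfer d1 d2 (O1 : measurableType d1) (O2 : measurableType d2)
  (R : realType) (P1 : {measure set O1 -> \bar R}) (P2 : {measure set O2 -> \bar R})
  (n m : nat) (f : 'I_n -> O1 -> 'I_m) (g : 'I_n -> O2 -> 'I_m) :
  (forall i a, measurable (f i @^-1` [set a])) ->
  (forall i a, measurable (g i @^-1` [set a])) ->
  (forall l : {ffun 'I_n -> 'I_m},
     P1 (\bigcap_(i in [set: 'I_n]) (f i @^-1` [set l i])) =
     (\prod_(i < n) P1 (f i @^-1` [set l i]))%E) ->
  (forall l : {ffun 'I_n -> 'I_m},
     P2 (\bigcap_(i in [set: 'I_n]) (g i @^-1` [set l i])) =
     (\prod_(i < n) P2 (g i @^-1` [set l i]))%E) ->
  (forall i a, P1 (f i @^-1` [set a]) = P2 (g i @^-1` [set a])) ->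
  forall D : pred {ffun 'I_n -> 'I_m},
  measurable [set w | D [ffun i => f i w]] /\
  P1 [set w | D [ffun i => f i w]] = P2 [set w | D [ffun i => g i w]].
Proof.
move=> mf mg If Ig Efg D.
pose h1 := fun w => [ffun i => f i w].
pose h2 := fun w => [ffun i => g i w].
have fib1 : forall l, h1 @^-1` [set l] = \bigcap_(i in [set: 'I_n]) (f i @^-1` [set l i]).
  move=> l; apply/seteqP; split => w /=.
    by move=> <- i _; rewrite /h1 ffunE.
  by move=> H; apply/ffunP => i; rewrite ffunE; exact: H.
have fib2 : forall l, h2 @^-1` [set l] = \bigcap_(i in [set: 'I_n]) (g i @^-1` [set l i]).
  move=> l; apply/seteqP; split => w /=.
    by move=> <- i _; rewrite /h2 ffunE.
  by move=> H; apply/ffunP => i; rewrite ffunE; exact: H.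
have m1 : forall l, measurable (h1 @^-1` [set l]).
  by move=> l; rewrite fib1; apply: fin_bigcap_measurable => // i _.
have m2 : forall l, measurable (h2 @^-1` [set l]).
  by move=> l; rewrite fib2; apply: fin_bigcap_measurable => // i _.
have e1 : [set w | D (h1 w)] = h1 @^-1` [set x | x \in enum D].
  by apply/seteqP; split => w /=; rewrite mem_enum.
have e2 : [set w | D (h2 w)] = h2 @^-1` [set x | x \in enum D].
  by apply/seteqP; split => w /=; rewrite mem_enum.
have [M1 S1] := @fiber_sum _ _ _ P1 _ _ m1 _ (enum_uniq D).
have [M2 S2] := @fiber_sum _ _ _ P2 _ _ m2 _ (enum_uniq D).
rewrite -/h1 -/h2 e1 e2; split => //.
rewrite S1 S2; apply: eq_bigr => l _.
rewrite fib1 fib2 If Ig; apply: eq_bigr => i _; exact: Efg.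
Qed.

Lemma quantile d (T : measurableType d) (R : realType) (PX : probability T R)
  (s : T -> R) (c : R) : measurable_fun setT s -> 0 <= c <= 1 ->
  measurable [set v | (PX [set x | (s x < v)%R] <= c%:E)%E] /\
  (c%:E <= PX (s @^-1` [set v | (PX [set x | (s x < v)%R] <= c%:E)%E]))%E.
Proof.
move=> ms /andP[c0 c1].
have mpre : forall B, measurable B -> measurable (s @^-1` B).
  by move=> B mB; rewrite -[s @^-1` B]setTI; exact: ms.
have mlt : forall v, measurable [set x | s x < v].
  move=> v; have -> : [set x | s x < v] = s @^-1` `]-oo, v[%classic.
    by apply/seteqP; split => x /=; rewrite in_itv.
  by apply: mpre; exact: measurable_itv.
set Tc := [set v | (PX [set x | (s x < v)%R] <= c%:E)%E].
have down : forall x y, y <= x -> Tc x -> Tc y.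
  move=> x y yx; rewrite /Tc /=; apply: le_trans; apply: le_measure; rewrite ?inE //.
  by move=> z /= /lt_le_trans; apply.
split; first exact: downset_measurable.
have fin : forall A, measurable A -> (PX A < +oo)%E.
  by move=> A mA; apply: (le_lt_trans (probability_le1 _ mA) (ltry 1)).
have [E|[E|[[v E]|[v E]]]] := downset_cases _ _ down.
- rewrite E; have [c0'|cpos] := leP c 0.
    by apply: (le_trans _ (measure_ge0 _ _)); rewrite lee_fin.
  exfalso.
  pose F := fun m : nat => [set x | s x < - m%:R].
  have H : (PX \o F) @ \oo --> PX (\bigcap_m F m).
    apply: nonincreasing_cvg_mu.
    - exact/fin/mlt.
    - by move=> m; exact: mlt.
    - by apply: bigcapT_measurable => m; exact: mlt.
    - move=> m k mk; apply/subsetPset => x /= /lt_le_trans; apply.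
      by rewrite lerN2 ler_nat.
  have E0 : \bigcap_m F m = set0.
    apply/seteqP; split => x // /(_ (Num.bound `|s x|)%N I) /=.
    have h1 := archi_boundP (normr_ge0 (s x)).
    have h2 := ler_norm (- s x); rewrite normrN in h2.
    move=> h3; have : - (Num.bound `|s x|)%:R < s x.
      by rewrite ltrNl (le_lt_trans h2).
    by rewrite ltNge (ltW h3).
  rewrite E0 measure0 in H.
  have L : (c%:E <= limn (PX \o F))%E.
    apply: lime_ge; first exact: (cvgP _ H).
    apply: nearW => m /=.
    have : ~ Tc (- m%:R) by rewrite E.
    by rewrite /Tc /= => /negP; rewrite -ltNge => /ltW.
  rewrite (cvg_lim (@ereal_hausdorff R) H) in L.
  by move: L; rewrite leNgt => /negP; apply; rewrite lte_fin.
- by rewrite E preimage_setT probability_setT lee_fin.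
- rewrite E.
  pose F := fun m : nat => [set x | s x < v + m.+1%:R^-1].
  have H : (PX \o F) @ \oo --> PX (\bigcap_m F m).
    apply: nonincreasing_cvg_mu.
    - exact/fin/mlt.
    - by move=> m; exact: mlt.
    - by apply: bigcapT_measurable => m; exact: mlt.
    - move=> m k mk; apply/subsetPset => x /= /lt_le_trans; apply.
      by rewrite lerD2l lef_pV2 ?posrE// ler_nat.
  have E0 : \bigcap_m F m = s @^-1` [set x | x <= v].
    apply/seteqP; split => x /=.
      move=> Hx; rewrite leNgt; apply/negP => /ltr_add_invr [k Hk].
      by have := Hx k I; rewrite /F /= ltNge (ltW Hk).
    move=> xv m _; rewrite /F /= (le_lt_trans xv) // ltrDl invr_gt0 ltr0n //.
  rewrite E0 in H.
  have L : (c%:E <= limn (PX \o F))%E.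
    apply: lime_ge; first exact: (cvgP _ H).
    apply: nearW => m /=.
    have : ~ Tc (v + m.+1%:R^-1).
      by rewrite E /= gerDl leNgt invr_gt0 ltr0n.
    by rewrite /Tc /= => /negP; rewrite -ltNge => /ltW.
  by rewrite (cvg_lim (@ereal_hausdorff R) H) in L.
- have : ~ Tc v by rewrite E /= ltxx.
  move=> nT; rewrite E; move: nT; rewrite /Tc /= => /negP; rewrite -ltNge => /ltW HH; exact: HH.
Qed.

Lemma uniform_le (R : realType) (p : R) : 0 <= p <= 1 ->
  uniform_prob (@ltr01 R) [set u | u <= p] = p%:E.
Proof.
move=> /andP[p0 p1].
rewrite /uniform_prob integral_uniform_pdf.
have -> : [set u | u <= p] `&` `[0, 1] = `[0, p]%classic.
  apply/seteqP; split => x /=; rewrite !in_itv /=.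
    by case => xp /andP[-> _].
  by move=> /andP[-> xp]; split => //; exact: le_trans p1.
rewrite (eq_integral (fun=> 1%:E)); last first.
  move=> x; rewrite inE /= in_itv /= => /andP[x0 xp].
  by rewrite /uniform_pdf x0 (le_trans xp p1) subr0 invr1.
rewrite integral_cst //= ?mul1e lebesgue_measure_itv /= lte_fin.
case: ltP => [_|]; first by rewrite sube0.
by move=> pp; apply/eqP; rewrite eq_sym eqe; rewrite eq_le p0 pp.
Qed.

Lemma sorted_count_nth_gt (R : realType) (s : seq R) (i : nat) (c : R) :
  sorted <=%R s -> (i < size s)%N -> c < nth 0 s i ->
  (count (fun x : R => (x <= c)%R) s <= i)%N.
Proof.
elim: s i => [|x s IH] i //= Hs.
have Hs' : sorted <=%R s by exact: path_sorted Hs.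
have Hall := order_path_min (@le_trans _ _) Hs.
case: i => [|i] /=.
  move=> _ cx; rewrite leNgt cx /= add0n.
  rewrite leqNgt -has_count; apply/hasPn => y ys /=.
  rewrite -ltNge; apply: (lt_le_trans cx); move/allP: Hall; exact.
move=> Hi Hc; have := IH i Hs' Hi Hc.
by case: (x <= c) => /=; rewrite ?add1n ?add0n // => H; apply: leqW.
Qed.

Lemma count_ostat (R : realType) (n : nat) (u : 'I_n -> R) (k : nat) (c : R) :
  (1 <= k <= n)%N -> (k <= count (fun i => (u i <= c)%R) (enum 'I_n))%N ->
  ostat u k <= c.
Proof.
case/andP=> k1 kn H; rewrite /ostat leNgt; apply/negP => Hc.
have Hs := sort_sorted (@le_total _ R) (map u (enum 'I_n)).
have Hsz : size (sort <=%R (map u (enum 'I_n))) = n.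
  by rewrite size_sort size_map size_enum_ord.
have := sorted_count_nth_gt _ _ _ _ Hs _ Hc.
rewrite Hsz prednK // => /(_ (leq_trans (leqnn _) kn)).
have -> : count (fun x => x <= c) (sort <=%R [seq u i | i <- enum 'I_n]) =
  count (fun i => (u i <= c)%R) (enum 'I_n).
  by rewrite (permP (permEl (perm_sort _ _))) count_map.
by move=> H2; have := leq_trans H H2; rewrite -{1}(prednK k1) ltnn.
Qed.

Definition lev (T : Type) (n : nat) (C : nat -> set T) (y : T) : nat :=
  count (predC (fun k => y \in C k)) (iota 1 n).
Arguments lev {T}.

Lemma lev_le (T : Type) (n : nat) (C : nat -> set T) y : (lev n C y <= n)%N.
Proof. by rewrite /lev (leq_trans (count_size _ _)) // size_iota. Qed.

Lemma lev_lt (T : Type) (n : nat) (C : nat -> set T) y k :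
  (forall j, (0 < j)%N -> (j < n)%N -> C j `<=` C j.+1) ->
  (1 <= k <= n)%N -> (lev n C y < k)%N = (y \in C k).
Proof.
move=> HC Hk; rewrite /lev count_iota_up //.
move=> j j0 jn; rewrite !in_setE; exact: HC.
Qed.

Lemma lev_meas_le d (T : measurableType d) (n : nat) (C : nat -> set T) :
  (forall j, (0 < j)%N -> (j < n)%N -> C j `<=` C j.+1) ->
  (forall k, (0 < k)%N -> (k <= n)%N -> measurable (C k)) ->
  forall j, measurable [set y | (lev n C y <= j)%N].
Proof.
move=> HC mC j; have [jn|nj] := ltnP j n.
  have -> : [set y | (lev n C y <= j)%N] = C j.+1.
    apply/seteqP; split => y /=.
      by rewrite -ltnS lev_lt // ?in_setE //; rewrite ltnS.
    by move=> Cy; rewrite -ltnS lev_lt // ?in_setE //.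
  exact: mC.
have -> : [set y | (lev n C y <= j)%N] = setT.
  by apply/seteqP; split => y //= _; exact: leq_trans (lev_le _ _ _ _) nj.
exact: measurableT.
Qed.

Lemma meas_eq_of_le d (T : measurableType d) (h : T -> nat) :
  (forall j, measurable [set y | (h y <= j)%N]) ->
  forall a, measurable [set y | h y = a].
Proof.
move=> mh [|a].
  have -> : [set y | h y = 0%N] = [set y | (h y <= 0)%N].
    by apply/seteqP; split => y /=; rewrite leqn0 => /eqP.
  exact: mh.
have -> : [set y | h y = a.+1] = [set y | (h y <= a.+1)%N] `\` [set y | (h y <= a)%N].
  apply/seteqP; split => y /=.
    by move=> ->; rewrite leqnn ltnn.
  by case=> H1 /negP; rewrite -ltnNge => H2; apply/eqP; rewrite eqn_leq H1 H2.
exact: measurableD.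
Qed.

Lemma pmf_of_cdf d1 d2 (T1 : measurableType d1) (T2 : measurableType d2)
  (R : realType) (P1 : probability T1 R) (P2 : probability T2 R)
  (h1 : T1 -> nat) (h2 : T2 -> nat) :
  (forall j, measurable [set y | (h1 y <= j)%N]) ->
  (forall j, measurable [set y | (h2 y <= j)%N]) ->
  (forall j, P1 [set y | (h1 y <= j)%N] = P2 [set y | (h2 y <= j)%N]) ->
  forall a, P1 [set y | h1 y = a] = P2 [set y | h2 y = a].
Proof.
move=> m1 m2 E [|a].
  have -> : [set y | h1 y = 0%N] = [set y | (h1 y <= 0)%N].
    by apply/seteqP; split => y /=; rewrite leqn0 => /eqP.
  have -> : [set y | h2 y = 0%N] = [set y | (h2 y <= 0)%N].
    by apply/seteqP; split => y /=; rewrite leqn0 => /eqP.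
  exact: E.
have D1 : forall (T : Type) (h : T -> nat), [set y | h y = a.+1] =
    [set y | (h y <= a.+1)%N] `\` [set y | (h y <= a)%N].
  move=> T h; apply/seteqP; split => y /=.
    by move=> ->; rewrite leqnn ltnn.
  by case=> H1 /negP; rewrite -ltnNge => H2; apply/eqP; rewrite eqn_leq H1 H2.
have I1 : forall (T : Type) (h : T -> nat),
    [set y | (h y <= a.+1)%N] `&` [set y | (h y <= a)%N] = [set y | (h y <= a)%N].
  move=> T h; apply/setIidr => y /=; exact: leqW.
rewrite !D1 !measureD ?I1 //.
- by congr (_ - _)%E; apply: E.
- exact: (le_lt_trans (probability_le1 _ (m2 _)) (ltry 1)).
- exact: (le_lt_trans (probability_le1 _ (m1 _)) (ltry 1)).
Qed.

Lemma mem_setb (T : Type) (pr : T -> bool) (x : T) : (x \in [set y | pr y]) = pr x.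
Proof. by apply/idP/idP; rewrite in_setE. Qed.

Lemma meas_ffun d (Om : measurableType d) (n : nat) (F : finType)
  (f : 'I_n -> Om -> F) :
  (forall i a, measurable (f i @^-1` [set a])) ->
  forall D : pred {ffun 'I_n -> F}, measurable [set w | D [ffun i => f i w]].
Proof.
move=> mf D.
pose h1 := fun w => [ffun i => f i w].
have fib1 : forall l, h1 @^-1` [set l] = \bigcap_(i in [set: 'I_n]) (f i @^-1` [set l i]).
  move=> l; apply/seteqP; split => w /=.
    by move=> <- i _; rewrite /h1 ffunE.
  by move=> H; apply/ffunP => i; rewrite ffunE; exact: H.
have m1 : forall l, measurable (h1 @^-1` [set l]).
  by move=> l; rewrite fib1; apply: fin_bigcap_measurable => // i _.
have e1 : [set w | D (h1 w)] = \bigcup_(l in [set l | D l]) h1 @^-1` [set l].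
  apply/seteqP; split => w /=; first by move=> Dw; exists (h1 w).
  by case=> l Dl hl; rewrite /= in hl; rewrite hl.
by rewrite -/h1 e1; apply: fin_bigcup_measurable => // l _.
Qed.

Lemma fib_lev (T : Type) (n : nat) (C : nat -> set T) (a : 'I_n.+1) :
  [set y | (inord (lev n C y) : 'I_n.+1) = a] = [set y | lev n C y = a].
Proof.
apply/seteqP; split => y /=.
  by move=> <-; rewrite inordK // ltnS lev_le.
by move=> H; apply: val_inj; rewrite /= inordK H.
Qed.

Lemma lev_le_set (T : Type) (n : nat) (C : nat -> set T) (j : nat) :
  (forall j, (0 < j)%N -> (j < n)%N -> C j `<=` C j.+1) ->
  (j < n)%N -> [set y | (lev n C y <= j)%N] = C j.+1.
Proof.
move=> HC jn; apply/seteqP; split => y /=.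
  by rewrite -ltnS lev_lt // ?in_setE //; rewrite ltnS.
by move=> Cy; rewrite -ltnS lev_lt // ?in_setE //.
Qed.

Lemma lev_le_setT (T : Type) (n : nat) (C : nat -> set T) (j : nat) :
  (n <= j)%N -> [set y | (lev n C y <= j)%N] = setT.
Proof.
by move=> nj; apply/seteqP; split => y //= _; exact: leq_trans (lev_le _ _ _ _) nj.
Qed.
Lemma ceil_nat (R : realType) (k : nat) : Num.ceil (k%:R : R) = k%:Z.
Proof.
apply: ceil_def; rewrite intrB /= !pmulrn lexx andbT.
by rewrite ltrBlDr ltrDl ltr01.
Qed.

Theorem theorem4 (R : realType) (d n : nat) (delta : R) (b : nat -> R)
  (dO : measure_display) (Omega : measurableType dO) (P : probability Omega R)
  (PX : probability (d.-tuple R) R) (s : d.-tuple R -> R)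
  (X : 'I_n -> {RV P >-> d.-tuple R})
  (dU : measure_display) (OmegaU : measurableType dU) (Q : probability OmegaU R)
  (U : 'I_n -> {RV Q >-> R}) :
  0 < delta < 1 ->
  measurable_fun setT s ->
  (forall i A, measurable A -> P (X i @^-1` A) = PX A) ->
  mutual_indep P (fun i => (X i : Omega -> d.-tuple R)) ->
  (forall i A, measurable A -> Q (U i @^-1` A) = uniform_prob (@ltr01 R) A) ->
  mutual_indep Q (fun i => (U i : OmegaU -> R)) ->
  b 0%N = 0 -> b n.+1 = 1 ->
  (forall k, (k <= n)%N -> b k <= b k.+1) ->
  let good_U := [set w | forall k : 'I_n, ostat (fun i => U i w) k.+1 <= b k.+1] in
  ((1 - delta)%:E <= Q good_U)%E ->
  exists E : set Omega, [/\ measurable E, ((1 - delta)%:E <= P E)%E &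
    forall w, E w -> forall t, 0 < t < 1 ->
      let A := [set x | hfun n b (umarg s (fun i => X i w) x) <= t] in
      (PX A <= t%:E)%E].
Proof.
move=> /andP[d0 d1] ms HX IX HU IU hb0 hbn1 hbmon good_U HQ.
have bmono : forall i j, (i <= j)%N -> (j <= n.+1)%N -> b i <= b j.
  move=> i j ij; elim: j ij => [|j IH]; first by rewrite leqn0 => /eqP ->.
  rewrite leq_eqVlt => /orP[/eqP -> //|]; rewrite ltnS => ij jn.
  by apply: le_trans (IH ij (ltnW jn)) (hbmon _ _); rewrite -ltnS.
have b01 : forall k, (k <= n.+1)%N -> 0 <= b k <= 1.
  by move=> k kn; rewrite -hb0 -hbn1 !bmono.
have mpre : forall B, measurable B -> measurable (s @^-1` B).
  by move=> B mB; rewrite -[s @^-1` B]setTI; exact: ms.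
pose Tk k := [set v | (PX [set x | (s x < v)%R] <= (b k)%:E)%E].
have Hq : forall k, (k <= n.+1)%N ->
    measurable (Tk k) /\ ((b k)%:E <= PX (s @^-1` Tk k))%E.
  by move=> k kn; exact: (quantile _ _ _ PX s (b k) ms (b01 k kn)).
pose C k := s @^-1` Tk k.
have mC : forall k, (0 < k)%N -> (k <= n)%N -> measurable (C k).
  by move=> k _ kn; apply: mpre; case: (Hq k (leqW kn)).
have mlt : forall v, measurable [set x | s x < v].
  move=> v; have -> : [set x | s x < v] = s @^-1` `]-oo, v[%classic.
    by apply/seteqP; split => x /=; rewrite in_itv.
  by apply: mpre; exact: measurable_itv.
have Cnest : forall j, (0 < j)%N -> (j < n)%N -> C j `<=` C j.+1.
  move=> j _ jn x; rewrite /C /Tk /= => H; apply: (le_trans H).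
  by rewrite lee_fin hbmon // ltnW.
pose q k := fine (PX (C k)).
have qE : forall k, (0 < k)%N -> (k <= n)%N -> (q k)%:E = PX (C k).
  move=> k k0 kn; rewrite /q fineK // ge0_fin_numE ?measure_ge0 //.
  exact: (le_lt_trans (probability_le1 _ (mC k k0 kn)) (ltry 1)).
have q01 : forall k, (0 < k)%N -> (k <= n)%N -> 0 <= q k <= 1.
  move=> k k0 kn; rewrite -!lee_fin qE // measure_ge0 /=.
  exact: probability_le1 (mC k k0 kn).
have bq : forall k, (0 < k)%N -> (k <= n)%N -> b k <= q k.
  move=> k k0 kn; rewrite -lee_fin qE //; case: (Hq k (leqW kn)) => _ //.
pose C' k := [set u : R | u <= q k].
have C'nest : forall j, (0 < j)%N -> (j < n)%N -> C' j `<=` C' j.+1.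
  move=> j j0 jn u; rewrite /C' /= => H; apply: (le_trans H).
  rewrite -lee_fin !qE //; try exact: ltnW.
  have := @le_measure _ _ _ PX (C j) (C j.+1); rewrite !inE.
  by move=> /(_ (mC _ j0 (ltnW jn)) (mC _ (ltn0Sn j) jn)); apply; exact: Cnest.
pose Cb k := [set u : R | u <= b k].
have Cbnest : forall j, (0 < j)%N -> (j < n)%N -> Cb j `<=` Cb j.+1.
  move=> j j0 jn u; rewrite /Cb /= => H; apply: (le_trans H).
  by rewrite hbmon // ltnW.
have mC' : forall k, (0 < k)%N -> (k <= n)%N -> measurable (C' k).
  move=> k _ _; have -> : C' k = `]-oo, q k]%classic.
    by apply/seteqP; split => x /=; rewrite in_itv.
  exact: measurable_itv.
have mCb : forall k, (0 < k)%N -> (k <= n)%N -> measurable (Cb k).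
  move=> k _ _; have -> : Cb k = `]-oo, b k]%classic.
    by apply/seteqP; split => x /=; rewrite in_itv.
  exact: measurable_itv.
pose f i w := (inord (lev n C (X i w)) : 'I_n.+1).
pose g i w := (inord (lev n C' (U i w)) : 'I_n.+1).
pose gb i w := (inord (lev n Cb (U i w)) : 'I_n.+1).
have mfibC : forall a : 'I_n.+1, measurable [set y | (inord (lev n C y) : 'I_n.+1) = a].
  move=> a; rewrite fib_lev; apply: meas_eq_of_le; exact: lev_meas_le.
have mfibC' : forall a : 'I_n.+1, measurable [set y | (inord (lev n C' y) : 'I_n.+1) = a].
  move=> a; rewrite fib_lev; apply: meas_eq_of_le; exact: lev_meas_le.
have mfibCb : forall a : 'I_n.+1, measurable [set y | (inord (lev n Cb y) : 'I_n.+1) = a].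
  move=> a; rewrite fib_lev; apply: meas_eq_of_le; exact: lev_meas_le.
have mf : forall i a, measurable (f i @^-1` [set a]).
  by move=> i a; exact: (measurable_funPTI (X i) (mfibC a)).
have mg : forall i a, measurable (g i @^-1` [set a]).
  by move=> i a; exact: (measurable_funPTI (U i) (mfibC' a)).
have mgb : forall i a, measurable (gb i @^-1` [set a]).
  by move=> i a; exact: (measurable_funPTI (U i) (mfibCb a)).
have If : forall l : {ffun 'I_n -> 'I_n.+1},
     P (\bigcap_(i in [set: 'I_n]) (f i @^-1` [set l i])) =
     (\prod_(i < n) P (f i @^-1` [set l i]))%E.
  by move=> l; exact: (IX (fun i => [set y | (inord (lev n C y) : 'I_n.+1) = l i]) (fun i => mfibC (l i))).
have Ig : forall l : {ffun 'I_n -> 'I_n.+1},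
     Q (\bigcap_(i in [set: 'I_n]) (g i @^-1` [set l i])) =
     (\prod_(i < n) Q (g i @^-1` [set l i]))%E.
  by move=> l; exact: (IU (fun i => [set y | (inord (lev n C' y) : 'I_n.+1) = l i]) (fun i => mfibC' (l i))).
have Efg : forall i a, P (f i @^-1` [set a]) = Q (g i @^-1` [set a]).
  move=> i a.
  have -> : P (f i @^-1` [set a]) = PX [set y | (inord (lev n C y) : 'I_n.+1) = a].
    exact: (HX i _ (mfibC a)).
  have -> : Q (g i @^-1` [set a]) = uniform_prob (@ltr01 R) [set y | (inord (lev n C' y) : 'I_n.+1) = a].
    exact: (HU i _ (mfibC' a)).
  rewrite !fib_lev; apply: pmf_of_cdf; try exact: lev_meas_le.
  move=> j; have [jn|nj] := ltnP j n.
    rewrite !lev_le_set // -qE //; symmetry; exact: (uniform_le _ _ (q01 _ (ltn0Sn j) jn)).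
  by rewrite !lev_le_setT // !probability_setT.
pose D := fun l : {ffun 'I_n -> 'I_n.+1} =>
  [forall k : 'I_n, (k.+1 <= count (fun i => (l i < k.+1)%N) (enum 'I_n))%N].
have [mE PQ] := transfer _ _ _ _ _ _ _ _ _ _ _ mf mg If Ig Efg D.
have cnt : forall Cx : nat -> set R,
    (forall j, (0 < j)%N -> (j < n)%N -> Cx j `<=` Cx j.+1) ->
    forall w (k : 'I_n),
    count (fun i => ([ffun i => (inord (lev n Cx (U i w)) : 'I_n.+1)] i < k.+1)%N) (enum 'I_n)
    = count (fun i => U i w \in Cx k.+1) (enum 'I_n).
  move=> Cx HCx w k; apply: eq_count => i /=.
  by rewrite ffunE inordK ?ltnS ?lev_le // -ltnS lev_lt // ltnS ltn_ord.
have eqgood : good_U = [set w | D [ffun i => gb i w]].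
  apply/seteqP; split => w /=.
    move=> Hw; apply/forallP => k; rewrite cnt //.
    rewrite (eq_count (a2 := fun i => (U i w <= b k.+1)%R)); last first.
      by move=> i; rewrite /Cb mem_setb.
    by apply: ostat_count; [rewrite ltn_ord | exact: Hw].
  move/forallP => Hw k; apply: count_ostat; first by rewrite ltn_ord.
  have := Hw k; rewrite cnt //.
  rewrite (eq_count (a2 := fun i => (U i w <= b k.+1)%R)) //.
  by move=> i; rewrite /Cb mem_setb.
have mgood : measurable good_U by rewrite eqgood; exact: meas_ffun.
exists [set w | D [ffun i => f i w]]; split => //.
  rewrite PQ; apply: (le_trans HQ).
  have := @le_measure _ _ _ Q good_U [set w | D [ffun i => g i w]]; rewrite !inE.
  move=> /(_ mgood (meas_ffun _ _ _ _ _ mg D)); apply.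
  rewrite eqgood => w /= /forallP Hw; apply/forallP => k.
  apply: (leq_trans (Hw k)); rewrite !cnt //; apply: sub_count => i /=.
  rewrite /Cb /C' !mem_setb => /le_trans; apply; apply: bq => //.
move=> w /= Dw t /andP[t0 t1].
pose S := fun i => s (X i w).
pose cnv := fun v => count (fun i => (S i <= v)%R) (enum 'I_n).
have cntn : forall v, (cnv v <= n)%N.
  by move=> v; rewrite (leq_trans (count_size _ _)) // size_enum_ord.
have cntmono : forall v v', v' <= v -> (cnv v' <= cnv v)%N.
  move=> v v' vv; apply: sub_count => i /= H; exact: le_trans H vv.
have key : forall x, hfun n b (umarg s (fun i => X i w) x) = b (1 + cnv (s x))%N.
  move=> x; rewrite /hfun /umarg mulrC divfK ?pnatr_eq0 // ceil_nat absz_nat //.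
have hA : [set x | hfun n b (umarg s (fun i => X i w) x) <= t] =
    s @^-1` [set v | b (1 + cnv v)%N <= t].
  by apply/seteqP; split => x /=; rewrite key.
rewrite hA.
have mB : measurable [set v | b (1 + cnv v)%N <= t].
  apply: downset_measurable => v v' vv /= H; apply: le_trans H.
  by apply: bmono; rewrite ?ltnS ?cntn ?leq_add2l ?cntmono.
have mA := mpre _ mB.
have [[x0 Ax0]|nA] := pselect (exists x, b (1 + cnv (s x))%N <= t); last first.
  have -> : s @^-1` [set v | b (1 + cnv v)%N <= t] = set0.
    by apply/seteqP; split => x // Hx; apply: nA; exists x.
  by rewrite measure0 lee_fin ltW.
have notn1 : forall v, b (1 + cnv v)%N <= t -> (1 + cnv v <= n)%N.
  move=> v H; have := cntn v; rewrite leq_eqVlt => /orP[/eqP E|]; last by [].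
  by move: H; rewrite add1n E hbn1 leNgt t1.
pose Pk := fun j => (j <= n)%N && (b j <= t).
have exP : exists j, Pk j by exists (1 + cnv (s x0))%N; rewrite /Pk Ax0 notn1.
have ubP : forall j, Pk j -> (j <= n)%N by move=> j /andP[].
case: (ex_maxnP exP ubP) => K /andP[Kn bK] Kmax.
have K1 : (0 < K)%N.
  by apply: leq_trans (Kmax (1 + cnv (s x0))%N _); rewrite // /Pk Ax0 notn1.
have kn : (K.-1 < n)%N by rewrite prednK.
pose k : 'I_n := Ordinal kn.
have Hk := forallP Dw k.
pose pK := fun i => X i w \in C K.
have Hk' : (K <= count pK (enum 'I_n))%N.
  move: Hk; rewrite /= prednK //.
  rewrite (eq_count (a2 := pK)) //.
  move=> i /=; rewrite ffunE inordK ?ltnS ?lev_le // lev_lt //.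
  by rewrite K1 Kn.
have /hasP [i1 _ pi1] : has pK (enum 'I_n) by rewrite has_count (leq_trans K1 Hk').
case: (@arg_maxP _ _ _ i1 pK S pi1) => i0 pi0 maxi0.
have sub : s @^-1` [set v | b (1 + cnv v)%N <= t] `<=` [set x | s x < S i0].
  move=> x /= Hx.
  have cK : (cnv (s x) < K)%N by apply: Kmax; rewrite /Pk Hx notn1.
  have : has (fun i => pK i && ~~ (S i <= s x)) (enum 'I_n).
    apply/negPn/negP => /hasPn H.
    have : (count pK (enum 'I_n) <= cnv (s x))%N.
      apply: sub_count => i pi; have := H i (mem_enum _ i); rewrite pi /=.
      by rewrite negbK.
    by move=> H2; have := leq_trans Hk' H2; rewrite leqNgt cK.
  case/hasP => i _ /andP[pi]; rewrite -ltNge => lt.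
  exact: lt_le_trans lt (maxi0 i pi).
have := @le_measure _ _ _ PX _ _ (mem_set mA) (mem_set (mlt (S i0))) sub.
move/le_trans; apply.
have : X i0 w \in C K by [].
rewrite in_setE /C /Tk /= => H; apply: (le_trans H); rewrite lee_fin //.
Qed.
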